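(* Let $G$ be a group and $A$ a set with at least two elements. Let $n \geq 2$ be an integer such that there is $g \in G$ whose order is greater than $n$ (possibly infinite). Then there exists a lazy cellular automaton $\tau : A^G \to A^G$ with $\mathrm{ord}(\tau) = n$.
   Context: $A^G$ is the set of maps $G \to A$ with shift action $(g\cdot x)(h) := x(hg)$. A cellular automaton is a map $\tau : A^G \to A^G$ with a finite $S \subseteq G$ and $\mu : A^S \to A$ such that $\tau(x)(g) = \mu((g\cdot x)|_S)$. $\tau$ is lazy if there is such a local defining map $\mu : A^S \to A$ with $e \in S$ ($e$ the identity of $G$) and $p \in A^S$ such that for all $z \in A^S$: $\mu(z) = z(e)$ iff $z \neq p$. $\tau^k$ is the $k$-fold composition, $\tau^0$ the identity; $\mathrm{ord}(\tau) := |\{\tau^k : k \in \mathbb{N}\}|$, $\mathbb{N}=\{0,1,\dots\}$. The order of $g \in G$ is the least $m \ge 1$ with $g^m = e$, or $\infty$ if none exists. *)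

(* Defs.v *)
From HB Require Import structures.
From mathcomp Require Import all_boot.
From Stdlib Require List.

Set Implicit Arguments.
Unset Strict Implicit.
Unset Printing Implicit Defensive.

Local Open Scope group_scope.

Section CA.
Variables (G : groupType) (A : Type).

Definition shift (g : G) (x : G -> A) : G -> A := fun h => x (h * g).

Definition pattern (S : seq G) := {s : G | s \in S} -> A.

Definition restr (S : seq G) (x : G -> A) : pattern S := fun s => x (sval s).

Definition local_defining_map (tau : (G -> A) -> (G -> A)) (S : seq G)
    (mu : pattern S -> A) : Prop :=
  forall (x : G -> A) (g : G), tau x g = mu (@restr S (shift g x)).

Definition cellular_automaton (tau : (G -> A) -> (G -> A)) : Prop :=
  exists (S : seq G) (mu : pattern S -> A), local_defining_map tau mu.

Definition lazy_ca (tau : (G -> A) -> (G -> A)) : Prop :=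
  exists (S : seq G) (mu : pattern S -> A) (he : (1 : G) \in S) (p : pattern S),
    local_defining_map tau mu /\
    forall z : pattern S, mu z = z (exist _ 1 he) <-> z <> p.

End CA.

Definition has_card (T : Type) (P : T -> Prop) (n : nat) : Prop :=
  exists s : list T, List.length s = n /\ List.NoDup s /\
    forall t, P t <-> List.In t s.

Definition ca_order_eq (X : Type) (tau : X -> X) (n : nat) : Prop :=
  has_card (fun f : X -> X => exists k : nat, f = iter k tau) n.

Definition order_gt (G : groupType) (g : G) (n : nat) : Prop :=
  forall m : nat, (1 <= m <= n)%N -> (g ^+ m)%g <> 1%g.

(* Main.v *)
Require Import Defs.
From HB Require Import structures.
From mathcomp Require Import all_boot.
From mathcomp Require Import zify.
From Stdlib Require Import ClassicalEpsilon Classical FunctionalExtensionality.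
From Stdlib Require List.

Section Proof.
Variables (G : groupType) (A : Type) (a b : A) (hab : a <> b)
    (n : nat) (hn : (2 <= n)%N) (g : G) (hg : order_gt g n).
Local Open Scope group_scope.

Lemma gpow_neq i j : (i < j)%N -> (j - i <= n)%N -> g ^+ i <> g ^+ j.
Proof.
move=> lt le E. apply: (hg (j - i)).
  by apply/andP; split; [rewrite subn_gt0|].
apply: (@mulgI _ (g ^+ i)). rewrite mulg1 -expgnDr subnKC; [by rewrite E | exact: ltnW].
Qed.

Lemma g_neq1 : g <> 1.
Proof. move=> E; apply: (@gpow_neq 0 1); try lia. by rewrite expg0 expg1 E. Qed.

Lemma gn_neq_g : g ^+ n <> g.
Proof. move=> E; apply: (@gpow_neq 1 n); try lia. by rewrite expg1 E. Qed.

Definition S : seq G := [:: 1; g; g ^+ n].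
Lemma he : (1 : G) \in S. Proof. by rewrite !inE eqxx. Qed.
Definition e1 : {s : G | s \in S} := exist _ 1 he.
Definition p : pattern A S := fun s => if sval s == g then b else a.
Definition mu (z : pattern A S) : A :=
  if excluded_middle_informative (z = p) then b else z e1.
Definition tau (x : G -> A) : G -> A := fun h => mu (restr (shift h x)).

Definition cond (x : G -> A) h := x h = a /\ x (g * h) = b /\ x (g ^+ n * h) = a.

Lemma restr_eq x h : restr (S:=S) (shift h x) = p <-> cond x h.
Proof.
split.
- move=> E.
  have F1 := f_equal (fun z => z e1) E.
  have hg1 : g \in S by rewrite !inE eqxx orbT.
  have hgn : g ^+ n \in S by rewrite !inE eqxx !orbT.
  have F2 := f_equal (fun z => z (exist _ g hg1)) E.
  have F3 := f_equal (fun z => z (exist _ (g ^+ n) hgn)) E.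
  rewrite /restr /shift /p /= in F1 F2 F3.
  rewrite eqxx in F2.
  have : (1 == g) = false by apply/eqP => H; apply: g_neq1; rewrite H.
  move=> H1; rewrite H1 mul1g in F1.
  have : (g ^+ n == g) = false by apply/eqP; exact: gn_neq_g.
  move=> H2; rewrite H2 in F3.
  by split; [|split].
- move=> [H1 [H2 H3]]. apply: functional_extensionality => -[v hv].
  rewrite /restr /shift /p /=.
  have : [|| v == 1, v == g | v == g ^+ n] by move: (hv); rewrite !inE.
  case/or3P => /eqP E; subst v.
  + have : ((1:G) == g) = false by apply/eqP => H; apply: g_neq1; rewrite H.
    by move=> ->; rewrite mul1g.
  + by rewrite eqxx.
  + have : (g ^+ n == g) = false by apply/eqP; exact: gn_neq_g.
    by move=> ->.
Qed.

Lemma tau_cond x h : cond x h -> tau x h = b.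
Proof.
move=> /restr_eq C. rewrite /tau /mu.
by destruct (excluded_middle_informative _).
Qed.

Lemma tau_ncond x h : ~ cond x h -> tau x h = x h.
Proof.
move=> C. rewrite /tau /mu.
destruct (excluded_middle_informative _) as [E|NE]; first by exfalso; apply: C; apply/restr_eq.
by rewrite /restr /shift /= mul1g.
Qed.

Lemma stay_b y h : y h = b -> tau y h = b.
Proof. move=> E; rewrite tau_ncond // => -[H _]; apply: hab; by rewrite -H. Qed.

Lemma a_back y h : tau y h = a -> y h = a.
Proof.
move=> E; case: (classic (cond y h)) => C.
  by rewrite tau_cond in E => //; case: hab.
by rewrite tau_ncond in E.
Qed.

Lemma change y h : tau y h <> y h -> cond y h.
Proof. move=> E; apply: NNPP => C; apply: E; exact: tau_ncond. Qed.

Lemma step_chain x k h :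
  iter k.+2 tau x h <> iter k.+1 tau x h ->
  iter k.+1 tau x (g * h) <> iter k tau x (g * h).
Proof.
move=> /change [H1 [H2 H3]] E.
set y := iter k tau x.
have Hy : y h = a.
  apply: a_back; exact: H1.
have Hn : y (g ^+ n * h) = a by apply: a_back; exact: H3.
have Hg : y (g * h) = b by rewrite /y -E; exact: H2.
have T : tau y h = b by apply: tau_cond; split; [|split]. apply: hab. by rewrite -H1 /= -/y -T.
Qed.

Lemma chain x j k h : (j <= k)%N ->
  iter k.+1 tau x h <> iter k tau x h ->
  iter (k - j).+1 tau x (g ^+ j * h) <> iter (k - j) tau x (g ^+ j * h).
Proof.
elim: j => [|j IH] le C.
  by rewrite subn0 expg0 mul1g.
have E : (k - j = (k - j.+1).+1)%N by lia.
have := IH (ltnW le) C. rewrite E => /step_chain.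
by rewrite mulgA -expgS.
Qed.

Lemma b_persist x t d h : iter t tau x h = b -> iter (d + t) tau x h = b.
Proof. move=> B; elim: d => [//|d IH]; rewrite addSn /=; exact: stay_b. Qed.

Lemma no_change x k h : (n.-1 <= k)%N -> iter k.+1 tau x h = iter k tau x h.
Proof.
move=> le; apply: NNPP => C.
have C' := C. move/change: C' => [_ [_ H3]].
have := @chain x n.-1 k h le C. move/change => [_ [H2 _]].
rewrite mulgA -expgS (ltn_predK hn) in H2.
have := @b_persist x _ n.-1 _ H2.
rewrite addnC subnK // => E. apply: hab. exact: (etrans (esym H3) E).
Qed.

Lemma stab d : iter (d + n.-1) tau = iter n.-1 tau.
Proof.
elim: d => [//|d IH]. apply: functional_extensionality => x.
apply: functional_extensionality => h.
rewrite addSn no_change; last by rewrite leq_addl.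
by rewrite IH.
Qed.

Definition Bset k (h : G) : bool := has (fun i => h == g ^+ i) (iota (n.-1 - k) k.+1).
Definition x0 : G -> A := fun h => if Bset 0 h then b else a.

Lemma BsetP k h : Bset k h = true <->
  exists i, (n.-1 - k <= i)%N /\ (i < n.-1 - k + k.+1)%N /\ h = g ^+ i.
Proof.
split.
  move/hasP => [i]; rewrite mem_iota => /andP [l1 l2] /eqP E.
  by exists i.
move=> [i [l1 [l2 E]]]. apply/hasP; exists i; last by apply/eqP.
by rewrite mem_iota l1 l2.
Qed.

Lemma traj k : (k <= n.-1)%N -> iter k tau x0 = fun h => if Bset k h then b else a.
Proof.
elim: k => [//|k IH] le.
rewrite iterS IH; last exact: ltnW.
apply: functional_extensionality => h.
set y := fun h => if Bset k h then b else a.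
case: (classic (cond y h)) => Cd.
- rewrite tau_cond //.
  move: Cd => [_ [H2 _]].
  have : Bset k (g * h) = true.
    move: H2; rewrite /y; case: (Bset k (g * h)) => // E; by case: hab.
  move/BsetP => [i [l1 [l2 E]]].
  have Ei : i = (i.-1).+1 by lia.
  have Eh : h = g ^+ i.-1.
    apply: (@mulgI _ g). by rewrite E -expgS -Ei.
  have -> : Bset k.+1 h = true.
    apply/BsetP; exists i.-1; split; [lia| split; [lia| exact: Eh]].
  by [].
- rewrite tau_ncond //. rewrite /y.
  case Bk: (Bset k h).
    have -> : Bset k.+1 h = true.
      move/BsetP: Bk => [i [l1 [l2 E]]].
      apply/BsetP; exists i; split; [lia| split; [lia| exact: E]].
    by [].
  case Bk1: (Bset k.+1 h) => //.
  exfalso; apply: Cd.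
  move/BsetP: Bk1 => [i [l1 [l2 E]]].
  have Ei : i = (n.-1 - k.+1)%N.
    apply: NNPP => NE. move: Bk => /negP; apply; apply/BsetP.
    exists i; split; [lia| split; [lia| exact: E]].
  split; first by rewrite /y Bk.
  split.
    rewrite /y. have -> : Bset k (g * h) = true.
      apply/BsetP; exists i.+1; split; [lia| split; [lia| by rewrite E expgS]].
    by [].
  rewrite /y. case Bn: (Bset k (g ^+ n * h)) => //.
  move/BsetP: Bn => [j [m1 [m2 Ej]]].
  exfalso. apply: (@gpow_neq j (n + i)); [lia| lia|].
  by rewrite -Ej E expgnDr.
Qed.

Lemma neq : iter n.-2 tau <> iter n.-1 tau.
Proof.
move=> E.
have F := f_equal (fun f => f x0 1) E. move: F => /=.
rewrite traj; last by lia.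
rewrite traj //.
have -> : Bset n.-1 1 = true.
  apply/BsetP; exists 0%N; split; [lia| split; [lia| by rewrite expg0]].
case Bk: (Bset n.-2 1); last by apply: hab.
move/BsetP: Bk => [i [l1 [l2 Ei]]].
exfalso. apply: (@gpow_neq 0 i); [lia| lia|]. by rewrite expg0.
Qed.

Lemma inj_aux i j : (i < j)%N -> (j < n)%N -> iter i tau <> iter j tau.
Proof.
move=> lij ljn E.
have F : iter (n.-2 - i + i) tau = iter (n.-2 - i + j) tau.
  apply: functional_extensionality => x. by rewrite !iterD E.
have e1' : (n.-2 - i + i = n.-2)%N by lia.
have e2' : (n.-2 - i + j = (n.-2 - i + j - n.-1) + n.-1)%N by lia.
rewrite e1' e2' stab in F. exact: neq F.
Qed.

Lemma main : exists tau : (G -> A) -> (G -> A), lazy_ca tau /\ ca_order_eq tau n.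
Proof.
exists tau; split.
- exists S, mu, he, p; split; first by move=> x h.
  move=> z; rewrite /mu.
  destruct (excluded_middle_informative _) as [E|NE].
    split=> // H; exfalso.
    have : z e1 = a.
      rewrite E /p /=. case: eqP => // H1. by case: g_neq1.
    move=> Ha. apply: hab. rewrite -Ha -H. by [].
  by split.
- exists (List.map (fun k => iter k tau) (List.seq 0 n)).
  split; first by rewrite List.length_map List.length_seq.
  split.
    apply: List.NoDup_map_NoDup_ForallPairs; last exact: List.seq_NoDup.
    move=> i j /List.in_seq [_ Hi] /List.in_seq [_ Hj] E.
    case: (ltngtP i j) => // Hij; exfalso.
      apply: (@inj_aux _ _ Hij _ E). apply/ltP. lia.
    apply: (@inj_aux _ _ Hij _ (esym E)). apply/ltP. lia.
  move=> f; split.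
    move=> [k ->]. apply/List.in_map_iff.
    case: (ltnP k n) => Hk.
      exists k; split => //. apply/List.in_seq. split; lia.
    exists n.-1; split.
      have -> : k = ((k - n.-1) + n.-1)%N by lia.
      by rewrite stab.
    apply/List.in_seq. split; lia.
  move/List.in_map_iff => [k [<- _]]. by exists k.
Qed.
End Proof.

Theorem corollary4 (G : groupType) (A : Type) (a b : A) (hab : a <> b)
    (n : nat) (hn : 2 <= n) (g : G) (hg : order_gt g n) :
  exists tau : (G -> A) -> (G -> A),
    lazy_ca tau /\ ca_order_eq tau n.
Proof. exact: (@main G A a b hab n hn g hg). Qed.
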